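(* Let $w=w_1\cdots w_n$ be a word of length $n\ge 2$ in which some letter $\mathrm{A}$ appears exactly $k$ times. Then $f(w)\ge 2k+1$. Further, if $w_i=w_{n-i+1}$ for every $i$ with $w_i=\mathrm{A}$, then $f(w)\ge 2k+2$.
   Context: A word of length $n$ is a sequence $w=w_1w_2\cdots w_n$ of letters (symbols). Let $[n]=\{1,\dots,n\}$. An $n$-grid is a function $G:[n]^2\to\Sigma$, where $\Sigma$ is an arbitrary set of letters. The $i$th row of $G$ contains $w$ if $G(i,j)=w_j$ for all $1\le j\le n$, or $G(i,j)=w_{n-j+1}$ for all $1\le j\le n$. The $j$th column contains $w$ if $G(i,j)=w_i$ for all $i$, or $G(i,j)=w_{n-i+1}$ for all $i$. The main diagonal contains $w$ if $G(i,i)=w_i$ for all $i$ or $G(i,i)=w_{n-i+1}$ for all $i$; the anti-diagonal contains $w$ if $G(i,n-i+1)=w_i$ for all $i$ or $G(i,n-i+1)=w_{n-i+1}$ for all $i$. Let $f(w,G)$ be the number of the $2n+2$ lines ($n$ rows, $n$ columns, $2$ diagonals) of $G$ that contain $w$, and $f(w)=\max_G f(w,G)$ over all $n$-grids $G$. *)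

(* Defs.v *)
(* Words of length n over an alphabet T are functions 'I_n -> T;
   index i : 'I_n stands for position i+1, and rev_ord i for position n-i. *)
From mathcomp Require Import all_boot all_order.
Set Implicit Arguments. Unset Strict Implicit. Unset Printing Implicit Defensive.

Section Grid.
Variables (T : eqType) (n : nat).

Definition grid := 'I_n -> 'I_n -> T.

Definition line_contains (w : 'I_n -> T) (l : 'I_n -> T) : bool :=
  [forall j, l j == w j] || [forall j, l j == w (rev_ord j)].

Definition row_contains w (G : grid) (i : 'I_n) := line_contains w (fun j => G i j).
Definition col_contains w (G : grid) (j : 'I_n) := line_contains w (fun i => G i j).
Definition diag_contains w (G : grid) := line_contains w (fun i => G i i).
Definition antidiag_contains w (G : grid) := line_contains w (fun i => G i (rev_ord i)).

Definition fwG (w : 'I_n -> T) (G : grid) : nat :=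
  #|[set i | row_contains w G i]| + #|[set j | col_contains w G j]|
  + diag_contains w G + antidiag_contains w G.

End Grid.

(* Main.v *)
Require Import Defs.
From mathcomp Require Import all_boot all_order.
From mathcomp Require Import zify.

Theorem lemma9 (T : eqType) (n : nat) (w : 'I_n -> T) (A : T) (k : nat) :
  2 <= n ->
  #|[set i | w i == A]| = k ->
  (exists G : grid T n, 2 * k + 1 <= fwG w G) /\
  ((forall i : 'I_n, w i = A -> w i = w (rev_ord i)) ->
   exists G : grid T n, 2 * k + 2 <= fwG w G).
Proof.
move=> _ Hk.
pose G : grid T n := fun i j => if w i == A then w j else w i.
have Hr : k <= #|[set i | row_contains w G i]|.
  rewrite -Hk; apply: subset_leq_card; apply/subsetP => i.
  rewrite !inE => Hi; apply/orP; left; apply/forallP => j.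
  by rewrite /G Hi.
have Hc : k <= #|[set j | col_contains w G j]|.
  rewrite -Hk; apply: subset_leq_card; apply/subsetP => j.
  rewrite !inE => /eqP Hj; apply/orP; left; apply/forallP => i.
  rewrite /G; case: ifP => [/eqP ->|//]; by rewrite Hj.
have Hd : diag_contains w G.
  apply/orP; left; apply/forallP => i; rewrite /G; by case: ifP.
split.
  exists G; rewrite /fwG Hd.
  have := leq_add Hr Hc; case: (antidiag_contains w G) => /=; lia.
move=> Hs; exists G.
have Ha : antidiag_contains w G.
  apply/orP; left; apply/forallP => i; rewrite /G.
  case: ifP => [/eqP Hi|//]; by rewrite -Hs.
rewrite /fwG Hd Ha /=.
have := leq_add Hr Hc. rewrite !mulSn mul0n addn0 -addnA addnn. move=> H; rewrite -[2]/(1+1) !addnA leq_add2r leq_add2r. by rewrite addnn.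
Qed.
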